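(* In the N-CIRL game described in the context, the primal value backup operator $G$, acting on bounded functions $v:\mathcal{S}\times\Delta(\Theta)\to\mathbb{R}$ by $$[Gv](s,b)=\max_{\bar\pi^A}\min_{\bar\pi^D}\Big\{\sum_{a,d,s',\vartheta}b(\vartheta)\bar\pi^A(a\mid s,\vartheta)\bar\pi^D(d\mid s)\mathcal{T}(s'\mid s,a,d)\big(R(s,a,d,s';\vartheta)+\gamma\,v(s',\tau(s,b,a))\big)\Big\},$$ with $\tau_\vartheta(s,b,a)=\bar\pi^A(a\mid s,\vartheta)b(\vartheta)/\sum_{\vartheta'}\bar\pi^A(a\mid s,\vartheta')b(\vartheta')$, is a contraction mapping with respect to the supremum norm. Consequently, iterating $G$ from any bounded initial function converges to the value function of the N-CIRL game, which is the fixed point of $v=Gv$.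
   Context: N-CIRL game: finite state set $\mathcal{S}$, finite attacker action set $\mathcal{A}$, finite defender action set $\mathcal{D}$, transition kernel $\mathcal{T}(s'\mid s,a,d)$, finite intent parameter set $\Theta$, bounded reward $R(s,a,d,s';\theta)$ to the attacker (the defender receives $-R$), discount factor $\gamma\in[0,1)$. The intent $\theta$ is known only to the attacker; states and both players' past actions are publicly observed. The value function is $v(s,b)=\max_{\sigma^A}\min_{\sigma^D}\mathbb{E}[\sum_{t\ge0}\gamma^tR(s_t,a_t,d_t,s_{t+1};\theta)\mid s_0=s,\theta\sim b]$ over behavioral strategies. The max in $G$ is over one-stage attacker strategies $\bar\pi^A:\mathcal{S}\times\Theta\to\Delta(\mathcal{A})$ and the min over one-stage defender strategies $\bar\pi^D:\mathcal{S}\to\Delta(\mathcal{D})$; $\Delta(X)$ is the set of probability distributions on $X$. *)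

(* Defs.v *)
From HB Require Import structures.
From mathcomp Require Import all_boot all_order all_algebra.
From mathcomp Require Import all_classical all_reals all_analysis.
Set Implicit Arguments. Unset Strict Implicit. Unset Printing Implicit Defensive.
Import Order.TTheory GRing.Theory Num.Theory.
Local Open Scope classical_set_scope.
Local Open Scope ring_scope.

Section NCIRL.
Variables (R : realType) (S A D Th : finType).
(* Tr s a d s' = T(s' | s, a, d);  Rw s a d s' th = R(s,a,d,s';th) *)
Variables (Tr : S -> A -> D -> S -> R) (Rw : S -> A -> D -> S -> Th -> R) (gamma : R).

Definition isdist (X : finType) (p : X -> R) : Prop :=
  (forall x, 0 <= p x) /\ \sum_(x : X) p x = 1.

(* value functions on S x Delta(Theta) (beliefs represented as functions Th -> R) *)
Definition vfun := S -> (Th -> R) -> R.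

Definition bounded (v : vfun) : Prop :=
  exists M : R, forall s b, isdist b -> `|v s b| <= M.

Definition supdist (v w : vfun) : R :=
  sup [set `|v s b - w s b| | s in [set: S] & b in [set b | isdist b]].

Definition stratA (pA : S -> Th -> A -> R) : Prop := forall s t, isdist (pA s t).
Definition stratD (pD : S -> D -> R) : Prop := forall s, isdist (pD s).

(* Bayesian belief update tau(s,b,a) under pA(.|s,.); when the denominator
   vanishes (a has probability 0) the belief is left unchanged (irrelevant,
   as the corresponding term carries weight 0). *)
Definition tau (pAs : Th -> A -> R) (b : Th -> R) (a : A) : Th -> R :=
  let den := \sum_(t' : Th) pAs t' a * b t' in
  if den == 0 then b else fun t => pAs t a * b t / den.

Definition stage (v : vfun) (s : S) (b : Th -> R)
  (pA : S -> Th -> A -> R) (pD : S -> D -> R) : R :=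
  \sum_(a : A) \sum_(d : D) \sum_(s' : S) \sum_(t : Th)
    b t * pA s t a * pD s d * Tr s a d s' *
    (Rw s a d s' t + gamma * v s' (tau (pA s) b a)).

(* primal value backup operator G (max/min rendered as sup/inf) *)
Definition G (v : vfun) : vfun := fun s b =>
  sup [set x | exists pA, stratA pA /\
     x = inf [set y | exists pD, stratD pD /\ y = stage v s b pA pD]].

(* public histories: past (state, attacker action, defender action) triples *)
Definition hist := seq (S * A * D).

(* behavioral strategies: attacker sees theta, the history and current state;
   defender sees the history and current state *)
Definition behavA (sA : Th -> hist -> S -> A -> R) : Prop :=
  forall t h s, isdist (sA t h s).
Definition behavD (sD : hist -> S -> D -> R) : Prop :=
  forall h s, isdist (sD h s).

Fixpoint Jfin (n : nat) (sA : Th -> hist -> S -> A -> R) (sD : hist -> S -> D -> R)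
  (h : hist) (s : S) (t : Th) {struct n} : R :=
  match n with
  | O => 0
  | n'.+1 => \sum_(a : A) \sum_(d : D) \sum_(s' : S)
      sA t h s a * sD h s d * Tr s a d s' *
      (Rw s a d s' t + gamma * Jfin n' sA sD (rcons h (s, a, d)) s' t)
  end.

(* E[ sum_{t>=0} gamma^t R_t | s_0 = s, theta ~ b ] as the limit of the
   finite-horizon expectations *)
Definition payoff sA sD (s : S) (b : Th -> R) : R :=
  limn (fun n => \sum_(t : Th) b t * Jfin n sA sD [::] s t).

Definition Vgame : vfun := fun s b =>
  sup [set x | exists sA, behavA sA /\
     x = inf [set y | exists sD, behavD sD /\ y = payoff sA sD s b]].

End NCIRL.

(* Main.v *)
Require Import Defs.
From HB Require Import structures.
From mathcomp Require Import all_boot all_order all_algebra.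
From mathcomp Require Import all_classical all_reals all_analysis.
From mathcomp Require Import ring lra.
Import Order.TTheory GRing.Theory Num.Theory.
Local Open Scope classical_set_scope.
Local Open Scope ring_scope.
Set Implicit Arguments. Unset Strict Implicit. Unset Printing Implicit Defensive.
Section SupInf.
Variable R : realType.

Lemma sup_bnd (E : set R) K : 0 <= K -> (forall x, E x -> `|x| <= K) -> `|sup E| <= K.
Proof.
move=> K0 HE; have [[x Ex]|nE] := pselect (exists x, E x); last first.
  have -> : E = set0 by apply/seteqP; split=> y // Ey; exfalso; apply: nE; exists y.
  by rewrite sup0 normr0.
have ubE : has_ubound E by exists K => y /HE /ler_normlP [].
rewrite ler_norml; apply/andP; split.
  apply: le_trans (ub_le_sup ubE Ex).
  by have /ler_normlP [] := HE _ Ex; rewrite lerNl.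
by apply: ge_sup; [exists x | move=> y /HE /ler_normlP []].
Qed.

Lemma inf_bnd (E : set R) K : 0 <= K -> (forall x, E x -> `|x| <= K) -> `|inf E| <= K.
Proof.
move=> K0 HE; rewrite /inf normrN; apply: sup_bnd => // y [x Ex <-].
by rewrite normrN; apply: HE.
Qed.

Definition supinf (X Y : Type) (P : X -> Prop) (Q : Y -> Prop) (f : X -> Y -> R) :=
  sup [set z | exists x, P x /\ z = inf [set w | exists y, Q y /\ w = f x y]].

Lemma supinf_bnd X Y (P : X -> Prop) (Q : Y -> Prop) f K : 0 <= K ->
  (forall x y, P x -> Q y -> `|f x y| <= K) -> `|supinf P Q f| <= K.
Proof.
move=> K0 Hf; apply: sup_bnd => // z [x [Px ->]].
by apply: inf_bnd => // w [y [Qy ->]]; apply: Hf.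
Qed.

Lemma supinf_le X Y X' Y' (P : X -> Prop) (Q : Y -> Prop) (P' : X' -> Prop) (Q' : Y' -> Prop)
  f g K e : 0 <= K ->
  (forall x y, P x -> Q y -> `|f x y| <= K) ->
  (forall x y, P' x -> Q' y -> `|g x y| <= K) ->
  (exists x, P x) -> (exists y, Q' y) ->
  (forall x, P x -> exists2 x', P' x' & forall y', Q' y' -> exists2 y, Q y & f x y <= g x' y' + e) ->
  supinf P Q f <= supinf P' Q' g + e.
Proof.
move=> K0 Hf Hg [x0 Px0] [y0 Qy0] H.
apply: ge_sup; first by exists (inf [set w | exists y, Q y /\ w = f x0 y]); exists x0.
move=> z [x [Px ->]]; have [x' Px' Hx'] := H x Px.
rewrite -lerBlDr.
apply: (@le_trans _ _ (inf [set w | exists y, Q' y /\ w = g x' y])); last first.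
  apply: ub_le_sup; last by exists x'.
  exists K => w [x'' [Px'' ->]].
  have : `|inf [set w | exists y, Q' y /\ w = g x'' y]| <= K.
    by apply: inf_bnd => // w0 [y [Qy ->]]; apply: Hg.
  by move=> /ler_normlP [].
apply: lb_le_inf; first by exists (g x' y0), y0.
move=> w [y' [Qy' ->]]; rewrite lerBlDr; have [y Qy le] := Hx' y' Qy'.
apply: le_trans le; apply: ge_inf; last by exists y.
by exists (-K) => w0 [y'' [Qy'' ->]]; have /ler_normlP [] := Hf _ _ Px Qy''; rewrite lerNl.
Qed.

Lemma supinf_empty X Y (P : X -> Prop) (Q : Y -> Prop) f :
  (~ exists x, P x) \/ (~ exists y, Q y) -> supinf P Q f = 0.
Proof.
case=> H.
  rewrite /supinf; have -> : [set z | exists x, P x /\ z = inf [set w | exists y, Q y /\ w = f x y]] = set0.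
    by apply/seteqP; split=> z // [x [Px _]]; exfalso; apply: H; exists x.
  exact: sup0.
rewrite /supinf; apply/eqP; rewrite -normr_le0; apply: sup_bnd => // z [x [_ ->]].
have -> : [set w | exists y, Q y /\ w = f x y] = set0.
  by apply/seteqP; split=> z' // [y [Qy _]]; exfalso; apply: H; exists y.
by rewrite inf0 normr0.
Qed.

End SupInf.

Section Game.
Variables (R : realType) (S A D Th : finType).
Variables (Tr : S -> A -> D -> S -> R) (Rw : S -> A -> D -> S -> Th -> R) (gamma : R).
Hypothesis HTr : forall s a d, isdist (Tr s a d).
Hypothesis g0 : 0 <= gamma.
Hypothesis g1 : gamma < 1.

Notation J := (Jfin Tr Rw gamma).
Notation bA := (@behavA R S A D Th).
Notation bD := (@behavD R S A D).
Notation sAt := (@stratA R S A Th).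
Notation sDt := (@stratD R S D).
Definition shA (x : S * A * D) (sA : Th -> hist S A D -> S -> A -> R) : Th -> hist S A D -> S -> A -> R :=
  fun t h s => sA t (x :: h) s.
Definition shD (x : S * A * D) (sD : hist S A D -> S -> D -> R) : hist S A D -> S -> D -> R :=
  fun h s => sD (x :: h) s.

Lemma J_shift n x sA sD h s t : J n sA sD (x :: h) s t = J n (shA x sA) (shD x sD) h s t.
Proof.
elim: n h s => [//|n IH] h s /=.
by apply: eq_bigr => a _; apply: eq_bigr => d _; apply: eq_bigr => s' _; rewrite IH.
Qed.

Lemma J_prefix n sA sA' sD sD' h s t :
  (forall h' s' t', sA t' (h ++ h') s' = sA' t' (h ++ h') s') ->
  (forall h' s', sD (h ++ h') s' = sD' (h ++ h') s') ->
  J n sA sD h s t = J n sA' sD' h s t.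
Proof.
elim: n h s => [//|n IH] h s HA HD /=.
apply: eq_bigr => a _; apply: eq_bigr => d _; apply: eq_bigr => s' _.
have := HA [::] s t; have := HD [::] s; rewrite cats0 => -> ->.
rewrite (IH (rcons h (s, a, d))) // => h' *; rewrite -cats1 -catA /=; [exact: HA | exact: HD].
Qed.

Definition first (h : hist S A D) (s : S) : S := if h is x :: _ then x.1.1 else s.

Lemma J_first n sA sA' sD sD' s t :
  (forall h' s' t', first h' s' = s -> sA t' h' s' = sA' t' h' s') ->
  (forall h' s', first h' s' = s -> sD h' s' = sD' h' s') ->
  J n sA sD [::] s t = J n sA' sD' [::] s t.
Proof.
case: n => [//|n] HA HD /=.
apply: eq_bigr => a _; apply: eq_bigr => d _; apply: eq_bigr => s' _.
rewrite HA // HD // (@J_prefix n sA sA' sD sD' [:: (s, a, d)]) // => *; [exact: HA | exact: HD].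
Qed.


Lemma W3 (I J K : finType) (p : I -> R) (q : J -> R) (r : I -> J -> K -> R) :
  isdist p -> isdist q -> (forall i j, isdist (r i j)) ->
  \sum_i \sum_j \sum_k p i * q j * r i j k = 1.
Proof.
move=> [_ Hp] [_ Hq] Hr.
rewrite -Hp; apply: eq_bigr => i _.
rewrite -[RHS]mulr1 -Hq big_distrr /=; apply: eq_bigr => j _.
by rewrite -big_distrr /= (proj2 (Hr i j)) mulr1.
Qed.

Lemma Bup3 (I J K : finType) (p : I -> R) (q : J -> R) (r : I -> J -> K -> R) F B :
  isdist p -> isdist q -> (forall i j, isdist (r i j)) ->
  (forall i j k, F i j k <= B) ->
  \sum_i \sum_j \sum_k p i * q j * r i j k * F i j k <= B.
Proof.
move=> Hp Hq Hr HF.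
rewrite -[leRHS]mul1r -(W3 Hp Hq Hr) !big_distrl /=.
apply: ler_sum => i _; rewrite big_distrl /=; apply: ler_sum => j _.
rewrite big_distrl /=; apply: ler_sum => k _; apply: ler_wpM2l => //.
by rewrite !mulr_ge0 //; [case: Hp | case: Hq | case: (Hr i j)].
Qed.

Lemma Babs3 (I J K : finType) (p : I -> R) (q : J -> R) (r : I -> J -> K -> R) F B :
  isdist p -> isdist q -> (forall i j, isdist (r i j)) ->
  (forall i j k, `|F i j k| <= B) ->
  `|\sum_i \sum_j \sum_k p i * q j * r i j k * F i j k| <= B.
Proof.
move=> Hp Hq Hr HF; rewrite ler_norml; apply/andP; split; last first.
  by apply: Bup3 => // i j k; have /ler_normlP [] := HF i j k.
rewrite lerNl -sumrN; under eq_bigr => i _ do rewrite -sumrN; under eq_bigr => i _ do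
  under eq_bigr => j _ do rewrite -sumrN.
under eq_bigr => i _ do under eq_bigr => j _ do under eq_bigr => k _ do rewrite -mulrN.
by apply: Bup3 => // i j k; have /ler_normlP [] := HF i j k; rewrite lerNl.
Qed.

Definition Rmax : R := \sum_(x : S * A * D * S * Th) `|Rw x.1.1.1.1 x.1.1.1.2 x.1.1.2 x.1.2 x.2|.

Lemma Rmax_ge s a d s' t : `|Rw s a d s' t| <= Rmax.
Proof.
rewrite /Rmax (bigD1 (s, a, d, s', t)) //= lerDl.
by apply: sumr_ge0 => *.
Qed.

Lemma Rmax_ge0 : 0 <= Rmax.
Proof. by apply: sumr_ge0 => *. Qed.

Definition M : R := Rmax / (1 - gamma).

Lemma M_eq : Rmax + gamma * M = M.
Proof.
rewrite /M; have h : 1 - gamma != 0 by rewrite subr_eq0 eq_sym lt_eqF.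
by field.
Qed.

Lemma M_ge0 : 0 <= M.
Proof. by rewrite /M divr_ge0 ?Rmax_ge0 // subr_ge0 ltW. Qed.

Lemma J_bnd n sA sD h s t : behavA sA -> behavD sD -> `|J n sA sD h s t| <= M.
Proof.
move=> HA HD; elim: n h s => [|n IH] h s /=; first by rewrite normr0 M_ge0.
rewrite -M_eq; apply: Babs3 => // a d s'.
apply: le_trans (ler_normD _ _) _; apply: lerD; first exact: Rmax_ge.
by rewrite normrM ger0_norm // ler_wpM2l.
Qed.


Definition den (pAs : Th -> A -> R) (b : Th -> R) (a : A) := \sum_(t : Th) pAs t a * b t.

Lemma collapse (pAs : Th -> A -> R) (b : Th -> R) a c1 c2 (F : Th -> R) :
  (forall t, 0 <= b t) -> (forall t, 0 <= pAs t a) ->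
  \sum_t b t * pAs t a * c1 * c2 * F t = den pAs b a * c1 * c2 * \sum_t tau pAs b a t * F t.
Proof.
move=> Hb Hp; rewrite /tau /den; case: eqP => [H0|H0].
  rewrite H0 !mul0r big1 // => t _.
  have := psumr_eq0P (fun t _ => mulr_ge0 (Hp t) (Hb t)) H0 (i := t) isT.
  by rewrite mulrC => ->; rewrite !mul0r.
rewrite big_distrr /=; apply: eq_bigr => t _.
have h := H0; move: h => /eqP h.
by field.
Qed.

Lemma tau_dist (pAs : Th -> A -> R) b a : isdist b -> (forall t, isdist (pAs t)) ->
  isdist (tau pAs b a).
Proof.
move=> [Hb0 Hb1] Hp; rewrite /tau; case: eqP => [//|H0]; split.
  move=> t; apply: mulr_ge0; first by apply: mulr_ge0; [case: (Hp t)|].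
  by rewrite invr_ge0; apply: sumr_ge0 => t' _; apply: mulr_ge0; [case: (Hp t')|].
by rewrite -mulr_suml divff //; apply/eqP.
Qed.

Lemma den_dist (pAs : Th -> A -> R) b : isdist b -> (forall t, isdist (pAs t)) ->
  isdist (den pAs b).
Proof.
move=> [Hb0 Hb1] Hp; split.
  by move=> a; apply: sumr_ge0 => t _; apply: mulr_ge0; [case: (Hp t)|].
rewrite /den exchange_big /= -Hb1; apply: eq_bigr => t _.
by rewrite -mulr_suml (proj2 (Hp t)) mul1r.
Qed.

Lemma stage_eq v s b pA pD : isdist b -> stratA pA ->
  stage Tr Rw gamma v s b pA pD =
  \sum_a \sum_d \sum_s' den (pA s) b a * pD s d * Tr s a d s' *
     (\sum_t tau (pA s) b a t * (Rw s a d s' t + gamma * v s' (tau (pA s) b a))).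
Proof.
move=> [Hb0 _] HA; rewrite /stage; apply: eq_bigr => a _; apply: eq_bigr => d _;
apply: eq_bigr => s' _.
rewrite (collapse _ _ (fun t => Rw s a d s' t + gamma * v s' (tau (pA s) b a))) //.
by move=> t; case: (HA s t).
Qed.

Definition Phi n sA sD (s : S) (b : Th -> R) := \sum_(t : Th) b t * J n sA sD [::] s t.

Definition pAof (sA : Th -> hist S A D -> S -> A -> R) : S -> Th -> A -> R :=
  fun s t => sA t [::] s.

Lemma Phi_eq n sA sD s b : isdist b -> behavA sA ->
  Phi n.+1 sA sD s b =
  \sum_a \sum_d \sum_s' den (pAof sA s) b a * sD [::] s d * Tr s a d s' *
     (\sum_t tau (pAof sA s) b a t * (Rw s a d s' t + gamma * J n sA sD [:: (s, a, d)] s' t)).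
Proof.
move=> [Hb0 _] HA; rewrite /Phi /=.
under eq_bigr => t _ do rewrite big_distrr /=.
rewrite exchange_big /=; apply: eq_bigr => a _.
under eq_bigr => t _ do rewrite big_distrr /=.
rewrite exchange_big /=; apply: eq_bigr => d _.
under eq_bigr => t _ do rewrite big_distrr /=.
rewrite exchange_big /=; apply: eq_bigr => s' _.
rewrite -(collapse _ _ (fun t => Rw s a d s' t + gamma * J n sA sD [:: (s, a, d)] s' t)) //; last first.
  by move=> t; exact: (proj1 (HA t [::] s) a).
by apply: eq_bigr => t _; rewrite /pAof !mulrA.
Qed.


Lemma wavg1 (I : finType) (p F : I -> R) B : isdist p -> (forall i, `|F i| <= B) ->
  `|\sum_i p i * F i| <= B.
Proof.
move=> [Hp0 Hp1] HF; apply: le_trans (ler_norm_sum _ _ _) _.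
rewrite -[leRHS]mul1r -Hp1 big_distrl /=; apply: ler_sum => i _.
by rewrite normrM ger0_norm // ler_wpM2l.
Qed.

Lemma diffE (r x y g : R) : (r + g * x) - (r + g * y) = g * (x - y).
Proof. by ring. Qed.

Lemma J_diff n k sA sD h s t : behavA sA -> behavD sD ->
  `|J (n + k) sA sD h s t - J n sA sD h s t| <= gamma ^+ n * (2 * M).
Proof.
move=> HA HD; elim: n h s => [|n IH] h s.
  rewrite /= subr0 expr0 mul1r; apply: le_trans (J_bnd k h s t HA HD) _.
  by rewrite ler_peMl ?M_ge0 // ler1n.
rewrite addSn /= -!sumrB; under eq_bigr => a _ do rewrite -!sumrB;
under eq_bigr => a _ do under eq_bigr => d _ do rewrite -!sumrB.
under eq_bigr => a _ do under eq_bigr => d _ do under eq_bigr => s' _ do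
  rewrite -mulrBr diffE.
apply: Babs3 => // a d s'.
by rewrite normrM ger0_norm // exprS -mulrA ler_wpM2l.
Qed.

Lemma exN e : 0 < e -> exists N, forall n, (N <= n)%N -> gamma ^+ n < e.
Proof.
move=> e0; have gl : `|gamma| < 1 by rewrite ger0_norm.
have := cvg_expr gl => /cvgr0_norm_lt/(_ e e0) [N _ HN].
exists N => n Hn; have := HN n Hn; rewrite /= ger0_norm //; exact: exprn_ge0.
Qed.

Lemma exN2 e : 0 < e -> exists N, forall n, (N <= n)%N -> gamma ^+ n * (2 * M) < e.
Proof.
move=> e0; have c0 : 0 < 2 * M + 1 by have := M_ge0; lra.
have [N HN] := exN (divr_gt0 e0 c0); exists N => n Hn.
have := HN n Hn; rewrite ltr_pdivlMr // => h; apply: le_lt_trans h.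
by rewrite ler_wpM2l ?exprn_ge0 // lerDl.
Qed.

Lemma Phi_diff n k sA sD s b : isdist b -> behavA sA -> behavD sD ->
  `|Phi (n + k) sA sD s b - Phi n sA sD s b| <= gamma ^+ n * (2 * M).
Proof.
move=> Hb HA HD; rewrite /Phi -sumrB.
under eq_bigr => t _ do rewrite -mulrBr.
by apply: wavg1 => // t; apply: J_diff.
Qed.

Lemma payoff_close n sA sD s b : isdist b -> behavA sA -> behavD sD ->
  `|payoff Tr Rw gamma sA sD s b - Phi n sA sD s b| <= gamma ^+ n * (2 * M).
Proof.
move=> Hb HA HD.
have cv : cvgn (fun m => Phi m sA sD s b).
  apply: cauchy_cvg; apply: cauchy_exP => e e0.
  have [N HN] := exN2 e0.
  exists (Phi N sA sD s b); exists N => // m /= Nm.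
  rewrite -ball_normE /ball_ /=.
  apply: le_lt_trans (HN N (leqnn N)); rewrite -[m](subnKC Nm) distrC.
  exact: Phi_diff.
rewrite /payoff ler_norml; apply/andP; split.
  rewrite lerBrDr; apply: limr_ge => //.
  exists n => // m /= nm; rewrite -[m](subnKC nm).
  have /ler_normlP [] := Phi_diff n (m - n) s Hb HA HD; rewrite /Phi; lra.
rewrite lerBlDl; apply: limr_le => //.
exists n => // m /= nm; rewrite -[m](subnKC nm).
have /ler_normlP [] := Phi_diff n (m - n) s Hb HA HD; rewrite /Phi; lra.
Qed.



Lemma Phi_bnd n sA sD s b : isdist b -> behavA sA -> behavD sD -> `|Phi n sA sD s b| <= M.
Proof. by move=> Hb HA HD; apply: wavg1 => // t; apply: J_bnd. Qed.

Lemma payoff_bnd sA sD s b : isdist b -> behavA sA -> behavD sD ->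
  `|payoff Tr Rw gamma sA sD s b| <= 3 * M.
Proof.
move=> Hb HA HD; have := payoff_close 0 s Hb HA HD.
have -> : Phi 0 sA sD s b = 0 by rewrite /Phi big1 // => t _; rewrite mulr0.
by rewrite subr0 expr0 mul1r => h; apply: le_trans h _; have := M_ge0; lra.
Qed.

Definition V n (s : S) (b : Th -> R) := supinf bA bD (fun sA sD => Phi n sA sD s b).

Lemma V_bnd n s b : isdist b -> `|V n s b| <= M.
Proof. by move=> Hb; apply: supinf_bnd => [|sA sD HA HD]; [exact: M_ge0 | exact: Phi_bnd]. Qed.

Lemma Vgame_bnd s b : isdist b -> `|Vgame Tr Rw gamma s b| <= 3 * M.
Proof.
move=> Hb; apply: (supinf_bnd (P := bA) (Q := bD)
  (f := fun sA sD => payoff Tr Rw gamma sA sD s b)) => [|sA sD HA HD].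
  by have := M_ge0; lra.
exact: payoff_bnd.
Qed.

Lemma Vgame_close n s b : isdist b -> `|Vgame Tr Rw gamma s b - V n s b| <= gamma ^+ n * (2 * M).
Proof.
move=> Hb.
have [[sA0 HA0] | nA] := pselect (exists sA, bA sA); last first.
  rewrite /V (supinf_empty _ (or_introl nA)).
  rewrite (_ : Vgame Tr Rw gamma s b = 0); last exact: (supinf_empty _ (or_introl nA)).
  by rewrite subrr normr0 mulr_ge0 ?exprn_ge0 // mulr_ge0 // M_ge0.
have [[sD0 HD0] | nD] := pselect (exists sD, bD sD); last first.
  rewrite /V (supinf_empty _ (or_intror nD)).
  rewrite (_ : Vgame Tr Rw gamma s b = 0); last exact: (supinf_empty _ (or_intror nD)).
  by rewrite subrr normr0 mulr_ge0 ?exprn_ge0 // mulr_ge0 // M_ge0.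
have K0 : 0 <= 3 * M by have := M_ge0; lra.
have B1 : forall sA sD, behavA sA -> behavD sD -> `|payoff Tr Rw gamma sA sD s b| <= 3 * M.
  by move=> *; apply: payoff_bnd.
have B2 : forall sA sD, behavA sA -> behavD sD -> `|Phi n sA sD s b| <= 3 * M.
  by move=> *; apply: le_trans (Phi_bnd n s _ _ _) _; rewrite // ler_peMl ?M_ge0 // ler1n.
rewrite ler_norml; apply/andP; split.
  rewrite lerNl opprB lerBlDr addrC.
  apply: (supinf_le K0 B2 B1); [by exists sA0 | by exists sD0 |].
  move=> sA HA; exists sA => // sD HD; exists sD => //.
  by have /ler_normlP [] := payoff_close n s Hb HA HD; lra.
rewrite lerBlDr addrC.
apply: (supinf_le K0 B1 B2); [by exists sA0 | by exists sD0 |].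
move=> sA HA; exists sA => // sD HD; exists sD => //.
by have /ler_normlP [] := payoff_close n s Hb HA HD; lra.
Qed.


Definition dom (v : vfun R S Th) K := forall s b, isdist b -> `|v s b| <= K.

Lemma stage_bnd v K s b pA pD : 0 <= K -> dom v K -> isdist b -> sAt pA -> sDt pD ->
  `|stage Tr Rw gamma v s b pA pD| <= Rmax + gamma * K.
Proof.
move=> K0 Hv Hb HA HD; rewrite stage_eq //.
apply: Babs3 => [||i j|a d s']; [exact: den_dist | exact: HD | exact: HTr |].
apply: wavg1 => [|t]; first exact: tau_dist.
apply: le_trans (ler_normD _ _) _; apply: lerD; first exact: Rmax_ge.
rewrite normrM ger0_norm // ler_wpM2l //; apply: Hv; exact: tau_dist.
Qed.

Lemma G_bnd v K : 0 <= K -> dom v K -> dom (G Tr Rw gamma v) (Rmax + gamma * K).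
Proof.
move=> K0 Hv s b Hb.
apply: (supinf_bnd (P := sAt) (Q := sDt) (f := fun pA pD => stage Tr Rw gamma v s b pA pD)).
  by apply: addr_ge0; [exact: Rmax_ge0 | exact: mulr_ge0].
by move=> pA pD HA HD; apply: stage_bnd.
Qed.

Lemma supdist_ge v w Kv Kw s b : dom v Kv -> dom w Kw -> isdist b ->
  `|v s b - w s b| <= supdist v w.
Proof.
move=> Hv Hw Hb; apply: ub_le_sup; last by exists s => //; exists b.
exists (Kv + Kw) => z [s' _ [b' Hb' <-]].
by apply: le_trans (ler_normB _ _) _; apply: lerD; [apply: Hv | apply: Hw].
Qed.

Lemma supdist_ge0 v w Kv Kw : dom v Kv -> dom w Kw -> 0 <= supdist v w.
Proof.
move=> Hv Hw.
have [[s [b Hb]] | ne] := pselect (exists (s : S) (b : Th -> R), isdist b).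
  by apply: le_trans (supdist_ge s Hv Hw Hb).
rewrite /supdist (_ : [set _ | _ in _ & _ in _] = set0) ?sup0 //.
by apply/seteqP; split=> z // [s' _ [b' Hb' _]]; apply: ne; exists s', b'.
Qed.

Lemma supdist_le (v w : vfun R S Th) c : 0 <= c -> (forall s b, isdist b -> `|v s b - w s b| <= c) ->
  supdist v w <= c.
Proof.
move=> c0 H.
have [[s [b Hb]] | ne] := pselect (exists (s : S) (b : Th -> R), isdist b).
  apply: ge_sup; first by exists `|v s b - w s b|; exists s => //; exists b.
  by move=> z [s' _ [b' Hb' <-]]; apply: H.
rewrite /supdist (_ : [set _ | _ in _ & _ in _] = set0) ?sup0 //.
by apply/seteqP; split=> z // [s' _ [b' Hb' _]]; apply: ne; exists s', b'.
Qed.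

Lemma stage_diff v w s b pA pD : isdist b -> sAt pA -> sDt pD ->
  stage Tr Rw gamma v s b pA pD - stage Tr Rw gamma w s b pA pD =
  \sum_a \sum_d \sum_s' den (pA s) b a * pD s d * Tr s a d s' *
     (gamma * (v s' (tau (pA s) b a) - w s' (tau (pA s) b a))).
Proof.
move=> Hb HA HD; rewrite !stage_eq // -sumrB; apply: eq_bigr => a _.
rewrite -sumrB; apply: eq_bigr => d _; rewrite -sumrB; apply: eq_bigr => s' _.
rewrite -mulrBr -sumrB; congr (_ * _).
under eq_bigr => t _ do rewrite -mulrBr diffE.
by rewrite -big_distrl /= (proj2 (tau_dist _ Hb (HA s))) mul1r.
Qed.

Lemma G_contr v w Kv Kw s b : 0 <= Kv -> 0 <= Kw -> dom v Kv -> dom w Kw -> isdist b ->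
  `|G Tr Rw gamma v s b - G Tr Rw gamma w s b| <= gamma * supdist v w.
Proof.
move=> Kv0 Kw0 Hv Hw Hb.
have sd0 := supdist_ge0 Hv Hw.
have [[pA0 HA0] | nA] := pselect (exists pA, sAt pA); last first.
  have -> : G Tr Rw gamma v s b = 0 := supinf_empty (fun pA pD => stage Tr Rw gamma v s b pA pD) (or_introl nA).
  have -> : G Tr Rw gamma w s b = 0 := supinf_empty (fun pA pD => stage Tr Rw gamma w s b pA pD) (or_introl nA).
  by rewrite subrr normr0 mulr_ge0.
have [[pD0 HD0] | nD] := pselect (exists pD, sDt pD); last first.
  have -> : G Tr Rw gamma v s b = 0 := supinf_empty (fun pA pD => stage Tr Rw gamma v s b pA pD) (or_intror nD).
  have -> : G Tr Rw gamma w s b = 0 := supinf_empty (fun pA pD => stage Tr Rw gamma w s b pA pD) (or_intror nD).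
  by rewrite subrr normr0 mulr_ge0.
set K := Rmax + gamma * (Kv + Kw).
have K0 : 0 <= K by apply: addr_ge0; [exact: Rmax_ge0 | apply: mulr_ge0 => //; exact: addr_ge0].
have Hv' : dom v (Kv + Kw) by move=> s' b' h; apply: le_trans (Hv _ _ h) _; rewrite lerDl.
have Hw' : dom w (Kv + Kw) by move=> s' b' h; apply: le_trans (Hw _ _ h) _; rewrite lerDr.
have B1 : forall pA pD, sAt pA -> sDt pD -> `|stage Tr Rw gamma v s b pA pD| <= K.
  by move=> pA pD HA HD; apply: stage_bnd => //; exact: addr_ge0.
have B2 : forall pA pD, sAt pA -> sDt pD -> `|stage Tr Rw gamma w s b pA pD| <= K.
  by move=> pA pD HA HD; apply: stage_bnd => //; exact: addr_ge0.
have Hd : forall pA pD, sAt pA -> sDt pD ->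
   `|stage Tr Rw gamma v s b pA pD - stage Tr Rw gamma w s b pA pD| <= gamma * supdist v w.
  move=> pA pD HA HD; rewrite stage_diff //.
  apply: Babs3 => [||i j|a d s']; [exact: den_dist | exact: HD | exact: HTr |].
  rewrite normrM ger0_norm // ler_wpM2l //; apply: supdist_ge Hv Hw _; exact: tau_dist.
rewrite ler_norml; apply/andP; split.
  rewrite lerNl opprB lerBlDr addrC.
  apply: (supinf_le K0 B2 B1); [by exists pA0 | by exists pD0 |].
  move=> pA HA; exists pA => // pD HD; exists pD => //.
  by have /ler_normlP [] := Hd _ _ HA HD; lra.
rewrite lerBlDr addrC.
apply: (supinf_le K0 B1 B2); [by exists pA0 | by exists pD0 |].
move=> pA HA; exists pA => // pD HD; exists pD => //.
by have /ler_normlP [] := Hd _ _ HA HD; lra.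
Qed.


Lemma inner_diff (tau0 r x y : Th -> R) g :
  \sum_t tau0 t * (r t + g * x t) - \sum_t tau0 t * (r t + g * y t) =
  g * (\sum_t tau0 t * x t - \sum_t tau0 t * y t).
Proof.
rewrite -!sumrB mulr_sumr; apply: eq_bigr => t _; ring.
Qed.

Lemma cmp_le s (pAs : Th -> A -> R) (q : D -> R) b (X Y : A -> D -> S -> Th -> R) e :
  isdist b -> (forall t, isdist (pAs t)) -> isdist q -> 0 <= e ->
  (forall a d s', \sum_t tau pAs b a t * X a d s' t <= \sum_t tau pAs b a t * Y a d s' t + e) ->
  \sum_a \sum_d \sum_s' den pAs b a * q d * Tr s a d s' *
     (\sum_t tau pAs b a t * (Rw s a d s' t + gamma * X a d s' t))
  <= \sum_a \sum_d \sum_s' den pAs b a * q d * Tr s a d s' *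
     (\sum_t tau pAs b a t * (Rw s a d s' t + gamma * Y a d s' t)) + e.
Proof.
move=> Hb Hp Hq e0 H; rewrite -lerBlDl -sumrB.
under eq_bigr => a _ do rewrite -sumrB; under eq_bigr => a _ do under eq_bigr => d _ do
  rewrite -sumrB.
under eq_bigr => a _ do under eq_bigr => d _ do under eq_bigr => s' _ do
  rewrite -mulrBr inner_diff.
apply: Bup3 => [||i j|a d s']; [exact: den_dist | exact: Hq | exact: HTr |].
apply: le_trans (_ : gamma * e <= e); last by rewrite ler_piMl // ltW.
by apply: ler_wpM2l => //; have := H a d s'; lra.
Qed.

Lemma tau_sum_const (pAs : Th -> A -> R) b a c : isdist b -> (forall t, isdist (pAs t)) ->
  \sum_t tau pAs b a t * c = c.
Proof. by move=> Hb Hp; rewrite -big_distrl /= (proj2 (tau_dist a Hb Hp)) mul1r. Qed.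


Lemma dir1 n s b e : isdist b -> 0 < e -> (exists pA, sAt pA) -> (exists pD, sDt pD) ->
  V n.+1 s b <= G Tr Rw gamma (V n) s b + e.
Proof.
move=> Hb e0 [pA0 HA0] [pD0 HD0].
have VM : dom (V n) M := fun s b Hb => V_bnd n s Hb.
apply: (supinf_le (K := M) M_ge0 (P := bA) (Q := bD) (P' := sAt) (Q' := sDt)
   (f := fun sA sD => Phi n.+1 sA sD s b) (g := fun pA pD => stage Tr Rw gamma (V n) s b pA pD)).
- by move=> sA sD HA HD; apply: Phi_bnd.
- by move=> pA pD HA HD; rewrite -[leRHS]M_eq; apply: stage_bnd => //; exact: M_ge0.
- by exists (fun t h s => pA0 s t) => t h s'; apply: HA0.
- by exists pD0.
move=> sA HA; exists (pAof sA); first by move=> s' t; apply: HA.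
move=> pD HD.
have Hx : forall x : A * D * S, exists rho, bD rho /\
   Phi n (shA (s, x.1.1, x.1.2) sA) rho x.2 (tau (pAof sA s) b x.1.1) <= V n x.2 (tau (pAof sA s) b x.1.1) + e.
  move=> [[a d] s'] /=.
  set tb := tau (pAof sA s) b a.
  have Htb : isdist tb by apply: tau_dist => // t; apply: HA.
  set E := [set w | exists y, bD y /\ w = Phi n (shA (s, a, d) sA) y s' tb].
  have HA' : bA (shA (s, a, d) sA) by move=> t h s''; apply: HA.
  have hE : has_inf E.
    split; first by exists (Phi n (shA (s, a, d) sA) (fun h s'' => pD s'') s' tb); exists (fun h s'' => pD s''); split => // h s''; apply: HD.
    exists (- M) => w [y [Hy ->]].
    by have /ler_normlP [] := Phi_bnd n s' Htb HA' Hy; rewrite lerNl.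
  have [w [rho [Hrho ->]] Hw] := inf_adherent e0 hE.
  exists rho; split => //.
  apply: le_trans (ltW Hw) _; rewrite lerD2r.
  apply: ub_le_sup; last by exists (shA (s, a, d) sA).
  exists M => z [sA' [HA'' ->]].
  have : `|inf [set w | exists y, bD y /\ w = Phi n sA' y s' tb]| <= M.
    by apply: inf_bnd => [|w0 [y [Hy ->]]]; [exact: M_ge0 | exact: Phi_bnd].
  by move=> /ler_normlP [].
have [rho Hrho] := choice Hx.
pose sD := fun (h : hist S A D) (s'' : S) =>
  match h with [::] => pD s'' | x :: h' => rho (x.1.2, x.2, first h' s'') h' s'' end.
have HsD : bD sD by move=> [|x h] s'' //=; case: (Hrho (x.1.2, x.2, first h s'')).
exists sD => //.
rewrite Phi_eq // stage_eq //; last by move=> s' t; apply: HA.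
apply: (cmp_le s (q := pD s) (X := fun a d s' t => J n sA sD [:: (s, a, d)] s' t)
  (Y := fun a d s' t => V n s' (tau (pAof sA s) b a))) => //.
- by move=> t; apply: HA.
- by apply: ltW.
move=> a d s'; rewrite tau_sum_const //; last by move=> t; apply: HA.
have [_ Hle] := Hrho (a, d, s'); apply: le_trans Hle => /=.
rewrite le_eqVlt; apply/orP; left; apply/eqP; rewrite /Phi; apply: eq_bigr => t _.
rewrite J_shift; congr (_ * _); apply: J_first => // h' s'' Hf.
by rewrite /shD /= Hf.
Qed.


Lemma dir2 n s b e : isdist b -> 0 < e -> (exists pA, sAt pA) -> (exists pD, sDt pD) ->
  G Tr Rw gamma (V n) s b <= V n.+1 s b + e.
Proof.
move=> Hb e0 [pA0 HA0] [pD0 HD0].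
have VM : dom (V n) M := fun s b Hb => V_bnd n s Hb.
apply: (supinf_le (K := M) M_ge0 (P := sAt) (Q := sDt) (P' := bA) (Q' := bD)
   (f := fun pA pD => stage Tr Rw gamma (V n) s b pA pD) (g := fun sA sD => Phi n.+1 sA sD s b)).
- by move=> pA pD HA HD; rewrite -[leRHS]M_eq; apply: stage_bnd => //; exact: M_ge0.
- by move=> sA sD HA HD; apply: Phi_bnd.
- by exists pA0.
- by exists (fun h s'' => pD0 s'') => h s''; apply: HD0.
move=> pA HA.
have Hx : forall x : A * D * S, exists sig, bA sig /\ forall sD', bD sD' ->
   V n x.2 (tau (pA s) b x.1.1) <= Phi n sig sD' x.2 (tau (pA s) b x.1.1) + e.
  move=> [[a d] s'] /=.
  set tb := tau (pA s) b a.
  have Htb : isdist tb by apply: tau_dist => // t; apply: HA.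
  set F := [set z | exists sA', bA sA' /\ z = inf [set w | exists y, bD y /\ w = Phi n sA' y s' tb]].
  have hF : has_sup F.
    split.
      exists (inf [set w | exists y, bD y /\ w = Phi n (fun t h s'' => pA0 s'' t) y s' tb]).
      by exists (fun t h s'' => pA0 s'' t); split => // t h s''; apply: HA0.
    exists M => z [sA' [HA' ->]].
    have : `|inf [set w | exists y, bD y /\ w = Phi n sA' y s' tb]| <= M.
      by apply: inf_bnd => [|w0 [y [Hy ->]]]; [exact: M_ge0 | exact: Phi_bnd].
    by move=> /ler_normlP [].
  have [z [sig [Hsig ->]] Hz] := sup_adherent e0 hF.
  exists sig; split => // sD' HD'.
  rewrite -lerBlDr; apply: le_trans (ltW Hz) _.
  apply: ge_inf; last by exists sD'.
  exists (- M) => w [y [Hy ->]].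
  by have /ler_normlP [] := Phi_bnd n s' Htb Hsig Hy; rewrite lerNl.
have [sig Hsig] := choice Hx.
pose sA := fun t (h : hist S A D) (s'' : S) =>
  match h with [::] => pA s'' t | x :: h' => sig (x.1.2, x.2, first h' s'') t h' s'' end.
have HsA : bA sA.
  by move=> t [|x h] s'' /=; [apply: HA | case: (Hsig (x.1.2, x.2, first h s''))].
exists sA => // sD HD.
exists (sD [::]); first by move=> s''; apply: HD.
rewrite Phi_eq // stage_eq //.
have -> : pAof sA s = pA s by [].
apply: (cmp_le s (q := sD [::] s) (pAs := pA s) (X := fun a d s' t => V n s' (tau (pA s) b a))
  (Y := fun a d s' t => J n sA sD [:: (s, a, d)] s' t)).
all: try by [ | move=> t; apply: HA | apply: HD | apply: ltW].
move=> a d s'; rewrite tau_sum_const //.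
have [_ Hle] := Hsig (a, d, s').
have HD' : bD (shD (s, a, d) sD) by move=> h s''; apply: HD.
apply: le_trans (Hle _ HD') _ => /=.
rewrite lerD2r le_eqVlt; apply/orP; left; apply/eqP; rewrite /Phi; apply: eq_bigr => t _.
rewrite J_shift; congr (_ * _); apply: J_first => // h' s'' t' Hf.
by rewrite /shA /= Hf.
Qed.


Lemma V_S n s b : isdist b -> V n.+1 s b = G Tr Rw gamma (V n) s b.
Proof.
move=> Hb.
have [hA|nA] := pselect (exists pA, sAt pA); last first.
  have nA' : ~ exists sA, bA sA.
    by move=> [sA HA]; apply: nA; exists (pAof sA) => s' t; apply: HA.
  rewrite /V (supinf_empty _ (or_introl nA')).
  by symmetry; exact: (supinf_empty (fun pA pD => stage Tr Rw gamma (V n) s b pA pD) (or_introl nA)).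
have [hD|nD] := pselect (exists pD, sDt pD); last first.
  have nD' : ~ exists sD, bD sD.
    by move=> [sD HD]; apply: nD; exists (sD [::]) => s'; apply: HD.
  rewrite /V (supinf_empty _ (or_intror nD')).
  by symmetry; exact: (supinf_empty (fun pA pD => stage Tr Rw gamma (V n) s b pA pD) (or_intror nD)).
apply/le_anti/andP; split; apply/ler_addgt0Pr => e e0; [exact: dir1 | exact: dir2].
Qed.

Lemma small0 (x c : R) : (forall e, 0 < e -> `|x| <= c * e) -> x = 0.
Proof.
move=> H; apply/eqP; rewrite -normr_le0; apply/ler_addgt0Pr => e e0; rewrite add0r.
have [c0|c0] := lerP c 0.
  by apply: le_trans (H e e0) _; apply: le_trans (ltW e0); rewrite pmulr_lle0.
have := H (e / c) (divr_gt0 e0 c0); rewrite mulrC -mulrA mulVf ?mulr1 //.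
by rewrite gt_eqF.
Qed.

Lemma fixpt s b : isdist b -> G Tr Rw gamma (Vgame Tr Rw gamma) s b = Vgame Tr Rw gamma s b.
Proof.
move=> Hb; apply/eqP; rewrite -subr_eq0; apply/eqP; apply: (@small0 _ 2) => e e0.
set W := Vgame Tr Rw gamma.
have HW : dom W (3 * M) by move=> s' b' h; apply: Vgame_bnd.
have K0 : 0 <= 3 * M by have := M_ge0; lra.
have [N HN] := exN2 e0; have hN := HN N (leqnn N).
have VM : dom (V N) M := fun s b Hb => V_bnd N s Hb.
have h1 := G_contr s K0 M_ge0 HW VM Hb.
have h2 : supdist W (V N) <= gamma ^+ N * (2 * M).
  apply: supdist_le => [|s' b' Hb']; last exact: Vgame_close.
  by apply: mulr_ge0; [exact: exprn_ge0 | have := M_ge0; lra].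
have h3 := Vgame_close N.+1 s Hb.
have cM : 0 <= gamma ^+ N * (2 * M).
  by apply: mulr_ge0; [exact: exprn_ge0 | have := M_ge0; lra].
have g1' : gamma <= 1 by exact: ltW.
have h4 : gamma * supdist W (V N) <= e.
  apply: le_trans (ler_wpM2l g0 h2) _; apply: le_trans (ltW hN).
  by apply: ler_piMl.
have h5 : gamma ^+ N.+1 * (2 * M) <= e.
  apply: le_trans (ltW hN); rewrite exprS -mulrA.
  by apply: ler_piMl.
have := ler_normD (G Tr Rw gamma W s b - G Tr Rw gamma (V N) s b) (V N.+1 s b - W s b).
have -> : G Tr Rw gamma W s b - G Tr Rw gamma (V N) s b + (V N.+1 s b - W s b) =
  G Tr Rw gamma W s b - W s b by rewrite V_S //; ring.
rewrite distrC in h3.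
move=> h; apply: le_trans h _; lra.
Qed.


Lemma dom_of (v : vfun R S Th) : bounded v -> exists K, 0 <= K /\ dom v K.
Proof.
move=> [K HK]; exists `|K|; split => // s b Hb; apply: le_trans (HK s b Hb) _.
exact: ler_norm.
Qed.

Lemma iter_dom v0 n : bounded v0 -> exists K, 0 <= K /\ dom (iter n (G Tr Rw gamma) v0) K.
Proof.
move=> hv; elim: n => [|n [K [K0 HK]]]; first exact: dom_of.
exists (Rmax + gamma * K); split; last exact: G_bnd.
by apply: addr_ge0; [exact: Rmax_ge0 | exact: mulr_ge0].
Qed.

Lemma main :
  [/\ (forall v, bounded v -> bounded (G Tr Rw gamma v)),
      (forall v w, bounded v -> bounded w ->
         supdist (G Tr Rw gamma v) (G Tr Rw gamma w) <= gamma * supdist v w),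
      (forall v0, bounded v0 -> forall e : R, 0 < e ->
         exists N : nat, forall n : nat, (N <= n)%N -> forall s b, isdist b ->
           `|iter n (G Tr Rw gamma) v0 s b - Vgame Tr Rw gamma s b| <= e)
    & bounded (Vgame Tr Rw gamma) /\
      (forall s b, isdist b -> G Tr Rw gamma (Vgame Tr Rw gamma) s b = Vgame Tr Rw gamma s b)].
Proof.
set W := Vgame Tr Rw gamma.
have HW : dom W (3 * M) by move=> s' b' h; apply: Vgame_bnd.
have K3 : 0 <= 3 * M by have := M_ge0; lra.
split.
- move=> v /dom_of [K [K0 HK]]; exists (Rmax + gamma * K); exact: G_bnd.
- move=> v w /dom_of [Kv [Kv0 Hv]] /dom_of [Kw [Kw0 Hw]].
  apply: supdist_le => [|s b Hb]; first by apply: mulr_ge0 => //; exact: supdist_ge0 Hv Hw.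
  exact: G_contr Kv0 Kw0 Hv Hw Hb.
- move=> v0 hv e e0.
  have [K [K0 HK]] := dom_of hv.
  set C := K + 3 * M.
  have C0 : 0 <= C by rewrite /C addr_ge0.
  have Hit : forall n s b, isdist b -> `|iter n (G Tr Rw gamma) v0 s b - W s b| <= gamma ^+ n * C.
    elim=> [|n IH] s b Hb.
      rewrite expr0 mul1r; apply: le_trans (ler_normB _ _) _; apply: lerD; [exact: HK | exact: HW].
    have [Kn [Kn0 HKn]] := iter_dom n hv.
    rewrite /= -[W s b](fixpt s Hb); apply: le_trans (G_contr s Kn0 K3 HKn HW Hb) _.
    rewrite exprS -mulrA ler_wpM2l //; apply: supdist_le => //.
    by apply: mulr_ge0 => //; exact: exprn_ge0.
  have c1 : 0 < C + 1 by have := C0; lra.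
  have [N HN] := exN (divr_gt0 e0 c1).
  exists N => n Nn s b Hb; apply: le_trans (Hit n s b Hb) _.
  have := HN n Nn; rewrite ltr_pdivlMr // => h; apply: le_trans (ltW h).
  by rewrite ler_wpM2l ?exprn_ge0 // lerDl.
- split; first by exists (3 * M).
  by move=> s b Hb; apply: fixpt.
Qed.

End Game.

Unset Implicit Arguments.

Theorem lemma2 (R : realType) (S A D Th : finType)
  (Tr : S -> A -> D -> S -> R) (Rw : S -> A -> D -> S -> Th -> R) (gamma : R) :
  (forall s a d, isdist (Tr s a d)) -> 0 <= gamma -> gamma < 1 ->
  [/\ (forall v, bounded v -> bounded (G Tr Rw gamma v)),
      (forall v w, bounded v -> bounded w ->
         supdist (G Tr Rw gamma v) (G Tr Rw gamma w) <= gamma * supdist v w),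
      (forall v0, bounded v0 -> forall e : R, 0 < e ->
         exists N : nat, forall n : nat, (N <= n)%N -> forall s b, isdist b ->
           `|iter n (G Tr Rw gamma) v0 s b - Vgame Tr Rw gamma s b| <= e)
    & bounded (Vgame Tr Rw gamma) /\
      (forall s b, isdist b -> G Tr Rw gamma (Vgame Tr Rw gamma) s b = Vgame Tr Rw gamma s b)].
Proof. by move=> HTr g0 g1; apply: main. Qed.
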